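(* For every $n\in\mathbb{N}_0$ and every $l\in\{0,\ldots,n\}$ the polynomials $A_n^l$ defined in the context satisfy $$\mathbf{x}\,A_{n}^{l}=\frac{1}{2(n+1)}\Big[(2n+3)\,A_{n+1}^{l}-(2l+1)\,\widehat{A_{n+1}^{l}}\Big]$$ and $$A_{n+1}^{l}=\frac{n+1}{2(n-l+1)(n+l+2)}\Big[(2n+3)\,\mathbf{x}\,A_{n}^{l}+(2l+1)\,\overline{\mathbf{x}}\,\widehat{A_{n}^{l}}\Big],$$ where products are quaternion products.
   Context: $\mathbb{H}$: real quaternions with basis $\mathbf{e}_0=1,\mathbf{e}_1,\mathbf{e}_2,\mathbf{e}_3$, $\mathbf{e}_i\mathbf{e}_j+\mathbf{e}_j\mathbf{e}_i=-2\delta_{ij}$ ($i,j=1,2,3$), $\mathbf{e}_1\mathbf{e}_2=\mathbf{e}_3$. A point $(x_0,x_1,x_2)\in\mathbb{R}^3$ is identified with $\mathbf{x}=x_0+x_1\mathbf{e}_1+x_2\mathbf{e}_2$, and $\overline{\mathbf{x}}=x_0-x_1\mathbf{e}_1-x_2\mathbf{e}_2$. For $g=\sum_{i=0}^3 g^i\mathbf{e}_i$ (real $g^i$) put $\widehat{g}:=g^0-g^1\mathbf{e}_1-g^2\mathbf{e}_2+g^3\mathbf{e}_3$. Spherical coordinates: $x_0=r\cos\theta$, $x_1=r\sin\theta\cos\varphi$, $x_2=r\sin\theta\sin\varphi$. Let $P_k$ be the Legendre polynomials and $P_k^m(t)=(1-t^2)^{m/2}\frac{d^m}{dt^m}P_k(t)$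 the associated Legendre functions (no Condon–Shortley phase; $P_k^m=0$ for $m>k$). For $n\in\mathbb{N}_0$, $0\le m\le n+1$ put $$\mathcal{A}^{m,n}(\theta)=\tfrac12\Big(\sin^2\theta\,\tfrac{d}{dt}[P_{n+1}^m(t)]_{t=\cos\theta}+(n+1)\cos\theta\,P_{n+1}^m(\cos\theta)\Big).$$ For $n\in\mathbb{N}_0$, $l=0,\ldots,n$ define $$A_n^l(\mathbf{x})=\frac{2^{l+1}n!\,r^n}{(n+l+2)!}\Big[(n+l+2)\mathcal{A}^{l,n}(\theta)\big(\cos l\varphi-\sin l\varphi\,\mathbf{e}_3\big)+\mathcal{A}^{l+1,n}(\theta)\big(\cos((l+1)\varphi)\,\mathbf{e}_1+\sin((l+1)\varphi)\,\mathbf{e}_2\big)\Big];$$ each $A_n^l$ is a homogeneous monogenic ($\bar\partial A_n^l=0$, $\bar\partial=\partial_{x_0}+\mathbf{e}_1\partial_{x_1}+\mathbf{e}_2\partial_{x_2}$ acting from the left) polynomial of degree $n$ in $x_0,x_1,x_2$ (e.g. $A_0^0=1$, $A_1^1=x_1-x_2\mathbf{e}_3$). *)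

(* Defs.v *)
From HB Require Import structures.
From mathcomp Require Import all_boot all_order all_algebra.
From mathcomp Require Import all_classical all_reals all_analysis.
Set Implicit Arguments. Unset Strict Implicit. Unset Printing Implicit Defensive.
Import Order.TTheory GRing.Theory Num.Theory.
Local Open Scope ring_scope.

Section Defs.
Variable R : realType.

(* Real quaternions g = g0 + g1 e1 + g2 e2 + g3 e3 *)
Record quat := Quat { q0 : R; q1 : R; q2 : R; q3 : R }.

Definition qadd (a b : quat) : quat :=
  Quat (q0 a + q0 b) (q1 a + q1 b) (q2 a + q2 b) (q3 a + q3 b).
Definition qscale (c : R) (a : quat) : quat :=
  Quat (c * q0 a) (c * q1 a) (c * q2 a) (c * q3 a).
Definition qsub (a b : quat) : quat := qadd a (qscale (-1) b).

(* Hamilton product: e_i e_i = -1, e1 e2 = e3 = - e2 e1, e2 e3 = e1, e3 e1 = e2 *)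
Definition qmul (a b : quat) : quat :=
  Quat (q0 a * q0 b - q1 a * q1 b - q2 a * q2 b - q3 a * q3 b)
       (q0 a * q1 b + q1 a * q0 b + q2 a * q3 b - q3 a * q2 b)
       (q0 a * q2 b - q1 a * q3 b + q2 a * q0 b + q3 a * q1 b)
       (q0 a * q3 b + q1 a * q2 b - q2 a * q1 b + q3 a * q0 b).

Definition qhat (g : quat) : quat := Quat (q0 g) (- q1 g) (- q2 g) (q3 g).

Definition paravec (x0 x1 x2 : R) : quat := Quat x0 x1 x2 0.
Definition parabar (x0 x1 x2 : R) : quat := Quat x0 (- x1) (- x2) 0.

Definition legendreP (k : nat) : {poly R} :=
  ((2 ^+ k * k`!%:R)^-1) *: ((('X ^+ 2 - 1) ^+ k)^`(k)).

(* associated Legendre functions (no Condon-Shortley phase), t in [-1,1]: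
   P_k^m(t) = (1 - t^2)^(m/2) d^m/dt^m P_k(t) *)
Definition assocLegendre (k m : nat) (t : R) : R :=
  Num.sqrt (1 - t ^+ 2) ^+ m * ((legendreP k)^`(m)).[t].

Definition Acal (m n : nat) (theta : R) : R :=
  2^-1 * (sin theta ^+ 2 * derive1 (assocLegendre n.+1 m) (cos theta)
          + n.+1%:R * cos theta * assocLegendre n.+1 m (cos theta)).

(* A_n^l at the point with spherical coordinates (r, theta, phi) *)
Definition Anl (n l : nat) (r theta phi : R) : quat :=
  qscale (2 ^+ l.+1 * n`!%:R * r ^+ n / (n + l + 2)`!%:R)
    (qadd
      (qscale ((n + l + 2)%:R * Acal l n theta)
              (Quat (cos (l%:R * phi)) 0 0 (- sin (l%:R * phi))))
      (qscale (Acal l.+1 n theta)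
              (Quat 0 (cos (l.+1%:R * phi)) (sin (l.+1%:R * phi)) 0))).

End Defs.

(* Main.v *)
Require Import Defs.
From HB Require Import structures.
From mathcomp Require Import all_boot all_order all_algebra.
From mathcomp Require Import all_classical all_reals all_analysis.
From mathcomp Require Import ring lra.
Import Order.TTheory GRing.Theory Num.Theory.
Local Open Scope ring_scope.

Lemma eq_via (T : zmodType) (x y a b : T) : a = b -> x - y = a - b -> x = y.
Proof. by move=> -> /eqP; rewrite subrr subr_eq0 => /eqP. Qed.

Arguments eq_via {T x y a b}.

Definition Upol (R : realType) (k : nat) : {poly R} := ('X ^+ 2 - 1) ^+ k.

Lemma dX2 (R : realType) : (('X ^+ 2 - 1 : {poly R}))^`() = 'X *+ 2.
Proof. by rewrite derivB derivXn derivC subr0. Qed.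

Lemma U_deriv (R : realType) k :
  ('X ^+ 2 - 1) * (Upol R k)^`() = 'X * Upol R k *+ (2 * k)%N.
Proof.
rewrite /Upol deriv_exp dX2; case: k => [|k]; first by rewrite !mulr0n mulr0.
rewrite -pred_Sn; set u := 'X ^+ 2 - 1; rewrite [in RHS]exprS; ring.
Qed.

Lemma U_derS (R : realType) k :
  (Upol R k.+1)^`() = 'X * Upol R k *+ (2 * k.+1)%N.
Proof. by rewrite /Upol deriv_exp dX2 -pred_Sn; ring. Qed.

Lemma Hrec (R : realType) (p : {poly R}) k
  (h : ('X ^+ 2 - 1) * p^`() = 'X * p *+ (2 * k)%N) m :
  ('X ^+ 2 - 1) * p^`(m.+2) + 'X * p^`(m.+1) *+ (2 * m.+1)%N + p^`(m) *+ (m.+1 * m)%N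
  = 'X * p^`(m.+1) *+ (2 * k)%N + p^`(m) *+ (2 * k * m.+1)%N.
Proof.
elim: m => [|m IH].
  have := congr1 (@deriv R) h.
  rewrite derivM dX2 derivMn derivM derivX derivn0 !derivnS derivn0.
  move=> e. rewrite !muln0 !mulr0n addr0 !muln1.
  apply: (eq_via e); ring.
have := congr1 (@deriv R) IH.
rewrite !(derivD, derivM, dX2, derivMn, derivX) -!derivnS => e.
apply: (eq_via e); ring.
Qed.

Lemma dnn (R : realType) (p : {poly R}) j k : (p^`(k))^`(j) = p^`(j + k).
Proof. by rewrite /derivn iterD. Qed.

Lemma LeibX (R : realType) (p : {poly R}) m :
  ('X * p)^`(m.+1) = 'X * p^`(m.+1) + p^`(m) *+ m.+1.
Proof.
have := derivnMXaddC m p 0; rewrite addr0 [p * 'X]mulrC => ->; rewrite addrC mulrC //.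
Qed.

Definition cL (R : realType) k : R := (2 ^+ k * k`!%:R)^-1.

Lemma cL_rel (R : realType) k : cL R k.+1 * (2 * k.+1)%N%:R = cL R k.
Proof.
rewrite /cL exprS factS natrM natrM.
have h1 : (2 : R) ^+ k != 0 by rewrite expf_neq0 // pnatr_eq0.
have h2 : (k`!%:R : R) != 0 by rewrite pnatr_eq0 -lt0n fact_gt0.
have h3 : (k.+1%:R : R) != 0 by rewrite pnatr_eq0.
field; rewrite ?h1 ?h2 ?h3 //=.

Qed.

Lemma legE (R : realType) k : legendreP R k = (cL R k)%:P * (Upol R k)^`(k).
Proof. by rewrite /legendreP mul_polyC. Qed.

Lemma polyC_cL (R : realType) k :
  (cL R k.+1)%:P *+ (2 * k.+1)%N = (cL R k)%:P :> {poly R}.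
Proof. by rewrite -(cL_rel R k) polyCM polyC_natr mulr_natr. Qed.

Lemma F1 (R : realType) k :
  (legendreP R k.+1)^`() = 'X * (legendreP R k)^`() + legendreP R k *+ k.+1.
Proof.
rewrite !legE !derivM !derivC !mul0r !add0r -!derivnS derivSn U_derS derivnMn LeibX.
rewrite -(polyC_cL R k); ring.
Qed.

Lemma legD (R : realType) k j :
  (legendreP R k)^`(j) = (cL R k)%:P * (Upol R k)^`(j + k).
Proof. by rewrite /legendreP derivnZ dnn mul_polyC. Qed.

Lemma legD1 (R : realType) k :
  (legendreP R k)^`() = (cL R k)%:P * (Upol R k)^`(k.+1).
Proof. by rewrite -derivn1 legD. Qed.

Lemma F3 (R : realType) k :
  ('X ^+ 2 - 1) * (legendreP R k)^`(2) + 'X * (legendreP R k)^`() *+ 2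
  = legendreP R k *+ (k * k.+1)%N.
Proof.
have e := @Hrec R _ _ (U_deriv R k) k.
rewrite legD legD1 legE.
apply: (eq_via (congr1 (fun q => (cL R k)%:P * q) e)).
change (2 + k)%N with k.+2; ring.
Qed.

Lemma F2 (R : realType) k :
  legendreP R k.+1 *+ k.+1
  = 'X * legendreP R k *+ k.+1 + ('X ^+ 2 - 1) * (legendreP R k)^`().
Proof.
rewrite legD1 !legE derivSn U_derS derivnMn -(polyC_cL R k).
case: k => [|k].
  rewrite !derivn0 /Upol expr0 derivn1 -polyC1 derivC; ring.
have e := @Hrec R _ _ (U_deriv R k.+1) k.
rewrite LeibX.
apply: (eq_via (congr1 (fun q => (cL R k.+2)%:P *+ (2 * k.+2)%N * q) (esym e))).
ring.
Qed.

Lemma D1 (R : realType) k m :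
  (legendreP R k.+1)^`(m.+1)
  = 'X * (legendreP R k)^`(m.+1) + (legendreP R k)^`(m) *+ (k.+1 + m).
Proof.
elim: m => [|m IH]; first by rewrite derivn1 F1 derivn0 addn0.
rewrite derivnS IH derivD derivM derivX derivMn -!derivnS mul1r.
rewrite addnS [_ *+ (_ + _).+1]mulrS; ring.
Qed.

Lemma O2 (R : realType) k m :
  ('X ^+ 2 - 1) * (legendreP R k)^`(m.+2) + 'X * (legendreP R k)^`(m.+1) *+ (2 * m.+1)%N
  + (legendreP R k)^`(m) *+ (m * m.+1)%N = (legendreP R k)^`(m) *+ (k * k.+1)%N.
Proof.
elim: m => [|m IH].
  by rewrite F3 derivn0 [(0*1)%N]/= mulr0n addr0.
have := congr1 (@deriv R) IH.
rewrite !(derivD, derivM, dX2, derivMn, derivX) -!derivnS => e.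
apply: (eq_via e); ring.
Qed.

Lemma scE (R : realType) (a b : R) : a *: b = a * b.
Proof. by []. Qed.

Lemma sqrt_sin (R : realType) (th : R) : 0 <= th <= pi ->
  Num.sqrt (1 - cos th ^+ 2) = sin th.
Proof.
move=> h; rewrite -sin2cos2 sqrtr_sqr ger0_norm //; exact: sin_ge0_pi.
Qed.

Lemma sin2_der (R : realType) k m (th : R) : 0 <= th <= pi ->
  sin th ^+ 2 * derive1 (assocLegendre k m) (cos th)
  = sin th ^+ m * (- m%:R * cos th * ((legendreP R k)^`(m)).[cos th]
                   + (1 - cos th ^+ 2) * ((legendreP R k)^`(m.+1)).[cos th]).
Proof.
move=> hth.
have s0 : 0 <= sin th by exact: sin_ge0_pi.
have [s00|sn0] := eqVneq (sin th) 0.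
  have -> : 1 - cos th ^+ 2 = 0 :> R by rewrite -sin2cos2 s00 expr0n.
  rewrite s00 expr0n mul0r /=; case: m => [|m]; last by rewrite expr0n mul0r.
  by rewrite expr0 mul1r mulr0n oppr0 !mul0r addr0.
set t := cos th.
set q : {poly R} := 1 - 'X ^+ 2.
have qt : q.[t] = sin th ^+ 2 by rewrite /q !hornerE sin2cos2.
have qpos : 0 < q.[t] by rewrite qt exprn_gt0 // lt_neqAle eq_sym sn0 s0.
have hg := is_derive_poly q t.
have hs : is_derive (horner q t) 1 Num.sqrt (2 * Num.sqrt (horner q t))^-1.
  exact: is_derive1_sqrt.
have hc := is_derive1_comp hs hg.
have hX := @is_deriveX _ _ _ m t 1 _ hc.
have hp := is_derive_poly ((legendreP R k)^`(m)) t.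
have hM := is_deriveM hX hp.
have -> : assocLegendre k m = ((Num.sqrt \o horner q) ^+ m * horner ((legendreP R k)^`(m))).
  apply/funext => u /=. rewrite /assocLegendre.
  by rewrite !fctE /q !hornerE.
rewrite derive1E derive_val !fctE /=.
have sq : Num.sqrt q.[t] = sin th by rewrite qt sqrtr_sqr ger0_norm.
have dq : q^`().[t] = - (2 * t) by rewrite /q derivB derivC derivXn !hornerE; ring.
rewrite sq dq -derivnS /t.
have sp : sin th != 0 := sn0.
clear hM hX hp; case: m => [|m]; first by rewrite !scE expr0 mulr0n -sin2cos2 /=; ring.
rewrite !scE -pred_Sn -sin2cos2 /=.
rewrite [sin th ^+ m.+1]exprS.
by field.
Qed.

Lemma cert (R : realType) (x y a b lam mu : R) :
  a = 1 -> b = 1 -> x - y = lam * (a - 1) + mu * (b - 1) -> x = y.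
Proof. by move=> -> ->; rewrite !subrr !mulr0 addr0 => /eqP; rewrite subr_eq0 => /eqP. Qed.
Arguments cert {R x y a b lam mu}.

Lemma quat_eq (R : realType) (a b : quat R) :
  q0 a = q0 b -> q1 a = q1 b -> q2 a = q2 b -> q3 a = q3 b -> a = b.
Proof. by case: a; case: b => /= ? ? ? ? ? ? ? ? -> -> -> ->. Qed.

Ltac side := repeat (apply/andP; split); apply/negbT/gt_eqF; first [lra | nra].

Definition Qshape (R : realType) (c P C S cp sp A0 A1 : R) : quat R :=
  qscale c (qadd (qscale (P * A0) (Quat C 0 0 (- S)))
                 (qscale A1 (Quat 0 (C * cp - S * sp) (S * cp + C * sp) 0))).
Arguments Qshape {R}.

Lemma model (R : realType) (n l : nat) (t s cp sp C S r rho sig K a0 a1 A0 A1 B0 B1 : R) :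
  (l <= n)%N -> s ^+ 2 + t ^+ 2 = 1 -> sp ^+ 2 + cp ^+ 2 = 1 ->
  A0 = sig / 2 * ((n%:R + 1 - l%:R) * t * a0 + (1 - t ^+ 2) * a1) ->
  A1 = sig * s / 2 * ((n%:R - l%:R) * t * a1
              + (2 * (l%:R + 1) * t * a1 + (l%:R * (l%:R + 1) - (n%:R + 1) * (n%:R + 2)) * a0)) ->
  B0 = sig / 2 * ((n%:R + 2 - l%:R) * t *
         (((n%:R + 2 + l%:R) * t * a0 - (1 - t ^+ 2) * a1) / (n%:R + 2 - l%:R))
         + (1 - t ^+ 2) * (t * a1 + (n%:R + 2 + l%:R) * a0)) ->
  B1 = sig * s / 2 * ((n%:R + 1 - l%:R) * t * (t * a1 + (n%:R + 2 + l%:R) * a0)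
              + (2 * (l%:R + 1) * t * (t * a1 + (n%:R + 2 + l%:R) * a0)
                 + (l%:R * (l%:R + 1) - (n%:R + 2) * (n%:R + 3)) *
                   (((n%:R + 2 + l%:R) * t * a0 - (1 - t ^+ 2) * a1) / (n%:R + 2 - l%:R)))) ->
  let A := Qshape (K * rho) (n + l + 2)%:R C S cp sp A0 A1 in
  let B := Qshape (K * (n%:R + 1) * r * rho / (n%:R + l%:R + 3)) (n.+1 + l + 2)%:R C S cp sp B0 B1 in
  qmul (paravec (r * t) (r * s * cp) (r * s * sp)) A
    = qscale (2 * n.+1%:R)^-1
        (qsub (qscale (2 * n + 3)%:R B) (qscale (2 * l + 1)%:R (qhat B)))
  /\
  B = qscale (n.+1%:R / (2 * (n - l + 1)%:R * (n + l + 2)%:R))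
        (qadd (qscale (2 * n + 3)%:R (qmul (paravec (r * t) (r * s * cp) (r * s * sp)) A))
              (qscale (2 * l + 1)%:R (qmul (parabar (r * t) (r * s * cp) (r * s * sp)) (qhat A)))).
Proof.
move=> hl e1 e2 hA0 hA1 hB0 hB1 A B.
have eB : (n - l + 1)%:R = n%:R - l%:R + 1 :> R by rewrite natrD natrB.
rewrite eB.
have n0 : (0 : R) <= n%:R by rewrite ler0n.
have l0 : (0 : R) <= l%:R by rewrite ler0n.
have ln : (l%:R : R) <= n%:R by rewrite ler_nat.
have p1 : (0 : R) < n%:R - l%:R + 1 by lra.
have p2 : (0 : R) < n%:R + l%:R + 2 by lra.
split.
  rewrite /A /B /Qshape; apply: quat_eq; cbn [q0 q1 q2 q3 qadd qsub qscale qmul qhat paravec parabar];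
    rewrite hA0 hA1 hB0 hB1.
  - apply: (cert (lam := (12%:R * sp ^+ 2 * C * r * rho * sig * K * a0 - 8%:R * sp ^+ 2 * C * r * rho * sig * K * l%:R * a0 - 7%:R * sp ^+ 2 * C * r * rho * sig * K * (l%:R) ^+ 2 * a0 + 2%:R * sp ^+ 2 * C * r * rho * sig * K * (l%:R) ^+ 3 * a0 + sp ^+ 2 * C * r * rho * sig * K * (l%:R) ^+ 4 * a0 + 40%:R * sp ^+ 2 * C * r * rho * sig * K * n%:R * a0 - 16%:R * sp ^+ 2 * C * r * rho * sig * K * n%:R * l%:R * a0 - 15%:R * sp ^+ 2 * C * r * rho * sig * K * n%:R * (l%:R) ^+ 2 * a0 + 2%:R * sp ^+ 2 * C * r * rho * sig * K * n%:R * (l%:R) ^+ 3 * a0 + sp ^+ 2 * C * r * rho * sig * K * n%:R * (l%:R) ^+ 4 * a0 + 51%:R * sp ^+ 2 * C * r * rho * sig * K * (n%:R) ^+ 2 * a0 - 10%:R * sp ^+ 2 * C * r * rho * sig * K * (n%:R) ^+ 2 * l%:R * a0 - 10%:R * sp ^+ 2 * C * r * rho * sig * K * (n%:R) ^+ 2 * (l%:R) ^+ 2 * a0 + 31%:R * sp ^+ 2 * C * r * rho * sig * K * (n%:R) ^+ 3 * a0 - 2%:R * sp ^+ 2 * C * r * rho * sig * K * (n%:R) ^+ 3 * l%:R * a0 - 2%:R * sp ^+ 2 * C * r * rho * sig * K * (n%:R) ^+ 3 * (l%:R) ^+ 2 * a0 + 9%:R * sp ^+ 2 * C * r * rho * sig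 * K * (n%:R) ^+ 4 * a0 + sp ^+ 2 * C * r * rho * sig * K * (n%:R) ^+ 5 * a0 + 12%:R * cp ^+ 2 * C * r * rho * sig * K * a0 - 8%:R * cp ^+ 2 * C * r * rho * sig * K * l%:R * a0 - 7%:R * cp ^+ 2 * C * r * rho * sig * K * (l%:R) ^+ 2 * a0 + 2%:R * cp ^+ 2 * C * r * rho * sig * K * (l%:R) ^+ 3 * a0 + cp ^+ 2 * C * r * rho * sig * K * (l%:R) ^+ 4 * a0 + 40%:R * cp ^+ 2 * C * r * rho * sig * K * n%:R * a0 - 16%:R * cp ^+ 2 * C * r * rho * sig * K * n%:R * l%:R * a0 - 15%:R * cp ^+ 2 * C * r * rho * sig * K * n%:R * (l%:R) ^+ 2 * a0 + 2%:R * cp ^+ 2 * C * r * rho * sig * K * n%:R * (l%:R) ^+ 3 * a0 + cp ^+ 2 * C * r * rho * sig * K * n%:R * (l%:R) ^+ 4 * a0 + 51%:R * cp ^+ 2 * C * r * rho * sig * K * (n%:R) ^+ 2 * a0 - 10%:R * cp ^+ 2 * C * r * rho * sig * K * (n%:R) ^+ 2 * l%:R * a0 - 10%:R * cp ^+ 2 * C * r * rho * sig * K * (n%:R) ^+ 2 * (l%:R) ^+ 2 * a0 + 31%:R * cp ^+ 2 * C * r * rho * sig * K * (n%:R) ^+ 3 * a0 - 2%:R * cp ^+ 2 * C * r * rho * sig * K * (n%:R) ^+ 3 * l%:R * a0 - 2%:R * cp ^+ 2 * C * r * rho * sig * K * (n%:R) ^+ 3 * (l%:R) ^+ 2 * a0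 + 9%:R * cp ^+ 2 * C * r * rho * sig * K * (n%:R) ^+ 4 * a0 + cp ^+ 2 * C * r * rho * sig * K * (n%:R) ^+ 5 * a0 - 12%:R * t * sp ^+ 2 * C * r * rho * sig * K * a1 - 4%:R * t * sp ^+ 2 * C * r * rho * sig * K * l%:R * a1 + 3%:R * t * sp ^+ 2 * C * r * rho * sig * K * (l%:R) ^+ 2 * a1 + t * sp ^+ 2 * C * r * rho * sig * K * (l%:R) ^+ 3 * a1 - 28%:R * t * sp ^+ 2 * C * r * rho * sig * K * n%:R * a1 - 8%:R * t * sp ^+ 2 * C * r * rho * sig * K * n%:R * l%:R * a1 + 4%:R * t * sp ^+ 2 * C * r * rho * sig * K * n%:R * (l%:R) ^+ 2 * a1 + t * sp ^+ 2 * C * r * rho * sig * K * n%:R * (l%:R) ^+ 3 * a1 - 23%:R * t * sp ^+ 2 * C * r * rho * sig * K * (n%:R) ^+ 2 * a1 - 5%:R * t * sp ^+ 2 * C * r * rho * sig * K * (n%:R) ^+ 2 * l%:R * a1 + t * sp ^+ 2 * C * r * rho * sig * K * (n%:R) ^+ 2 * (l%:R) ^+ 2 * a1 - 8%:R * t * sp ^+ 2 * C * r * rho * sig * K * (n%:R) ^+ 3 * a1 - t * sp ^+ 2 * C * r * rho * sig * K * (n%:R) ^+ 3 * l%:R * a1 - t * sp ^+ 2 * C * r * rho * sig * K * (n%:R) ^+ 4 * a1 - 12%:R * t * cp ^+ 2 * C * r * rho * sig * K * a1 - 4%:R * t * cp ^+ 2 * C * r * rho * sig * K * l%:R * a1 +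 3%:R * t * cp ^+ 2 * C * r * rho * sig * K * (l%:R) ^+ 2 * a1 + t * cp ^+ 2 * C * r * rho * sig * K * (l%:R) ^+ 3 * a1 - 28%:R * t * cp ^+ 2 * C * r * rho * sig * K * n%:R * a1 - 8%:R * t * cp ^+ 2 * C * r * rho * sig * K * n%:R * l%:R * a1 + 4%:R * t * cp ^+ 2 * C * r * rho * sig * K * n%:R * (l%:R) ^+ 2 * a1 + t * cp ^+ 2 * C * r * rho * sig * K * n%:R * (l%:R) ^+ 3 * a1 - 23%:R * t * cp ^+ 2 * C * r * rho * sig * K * (n%:R) ^+ 2 * a1 - 5%:R * t * cp ^+ 2 * C * r * rho * sig * K * (n%:R) ^+ 2 * l%:R * a1 + t * cp ^+ 2 * C * r * rho * sig * K * (n%:R) ^+ 2 * (l%:R) ^+ 2 * a1 - 8%:R * t * cp ^+ 2 * C * r * rho * sig * K * (n%:R) ^+ 3 * a1 - t * cp ^+ 2 * C * r * rho * sig * K * (n%:R) ^+ 3 * l%:R * a1 - t * cp ^+ 2 * C * r * rho * sig * K * (n%:R) ^+ 4 * a1) / ((2%:R + 2%:R * n%:R) * (3%:R + l%:R + n%:R) * (2%:R - l%:R + n%:R))) (mu := (12%:R * C * r * rho * sig * K * a0 - 8%:R * C * r * rho * sig * K * l%:R * a0 - 7%:R * C * r * rho * sig * K * (l%:R) ^+ 2 * a0 + 2%:R * C * r * rho * sig * K * (l%:R) ^+ 3 * a0 + C * r * rho * sig * K * (l%:R) ^+ 4 * a0 + 40%:R * C * r * rho * sig * K * n%:R * a0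 - 16%:R * C * r * rho * sig * K * n%:R * l%:R * a0 - 15%:R * C * r * rho * sig * K * n%:R * (l%:R) ^+ 2 * a0 + 2%:R * C * r * rho * sig * K * n%:R * (l%:R) ^+ 3 * a0 + C * r * rho * sig * K * n%:R * (l%:R) ^+ 4 * a0 + 51%:R * C * r * rho * sig * K * (n%:R) ^+ 2 * a0 - 10%:R * C * r * rho * sig * K * (n%:R) ^+ 2 * l%:R * a0 - 10%:R * C * r * rho * sig * K * (n%:R) ^+ 2 * (l%:R) ^+ 2 * a0 + 31%:R * C * r * rho * sig * K * (n%:R) ^+ 3 * a0 - 2%:R * C * r * rho * sig * K * (n%:R) ^+ 3 * l%:R * a0 - 2%:R * C * r * rho * sig * K * (n%:R) ^+ 3 * (l%:R) ^+ 2 * a0 + 9%:R * C * r * rho * sig * K * (n%:R) ^+ 4 * a0 + C * r * rho * sig * K * (n%:R) ^+ 5 * a0 - 12%:R * t * C * r * rho * sig * K * a1 - 4%:R * t * C * r * rho * sig * K * l%:R * a1 + 3%:R * t * C * r * rho * sig * K * (l%:R) ^+ 2 * a1 + t * C * r * rho * sig * K * (l%:R) ^+ 3 * a1 - 28%:R * t * C * r * rho * sig * K * n%:R * a1 - 8%:R * t * C * r * rho * sig * K * n%:R * l%:R * a1 + 4%:R * t * C * r * rho * sig * K * n%:R * (l%:R) ^+ 2 * a1 + t * C * r * rho * sig * K * n%:R * (l%:R) ^+ 3 * a1 - 23%:R * t * C * r * rho * sig * K * (n%:R) ^+ 2 * a1 - 5%:R * t * C * r * rho * sig * K * (n%:R)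 ^+ 2 * l%:R * a1 + t * C * r * rho * sig * K * (n%:R) ^+ 2 * (l%:R) ^+ 2 * a1 - 8%:R * t * C * r * rho * sig * K * (n%:R) ^+ 3 * a1 - t * C * r * rho * sig * K * (n%:R) ^+ 3 * l%:R * a1 - t * C * r * rho * sig * K * (n%:R) ^+ 4 * a1 - 12%:R * t ^+ 2 * C * r * rho * sig * K * a0 + 8%:R * t ^+ 2 * C * r * rho * sig * K * l%:R * a0 + 7%:R * t ^+ 2 * C * r * rho * sig * K * (l%:R) ^+ 2 * a0 - 2%:R * t ^+ 2 * C * r * rho * sig * K * (l%:R) ^+ 3 * a0 - t ^+ 2 * C * r * rho * sig * K * (l%:R) ^+ 4 * a0 - 40%:R * t ^+ 2 * C * r * rho * sig * K * n%:R * a0 + 16%:R * t ^+ 2 * C * r * rho * sig * K * n%:R * l%:R * a0 + 15%:R * t ^+ 2 * C * r * rho * sig * K * n%:R * (l%:R) ^+ 2 * a0 - 2%:R * t ^+ 2 * C * r * rho * sig * K * n%:R * (l%:R) ^+ 3 * a0 - t ^+ 2 * C * r * rho * sig * K * n%:R * (l%:R) ^+ 4 * a0 - 51%:R * t ^+ 2 * C * r * rho * sig * K * (n%:R) ^+ 2 * a0 + 10%:R * t ^+ 2 * C * r * rho * sig * K * (n%:R) ^+ 2 * l%:R * a0 + 10%:R * t ^+ 2 * C * r * rho * sig * K * (n%:R) ^+ 2 * (l%:R) ^+ 2 * a0 - 31%:R * t ^+ 2 * C * r * rho * sig * K * (n%:R) ^+ 3 * a0 + 2%:R * t ^+ 2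 * C * r * rho * sig * K * (n%:R) ^+ 3 * l%:R * a0 + 2%:R * t ^+ 2 * C * r * rho * sig * K * (n%:R) ^+ 3 * (l%:R) ^+ 2 * a0 - 9%:R * t ^+ 2 * C * r * rho * sig * K * (n%:R) ^+ 4 * a0 - t ^+ 2 * C * r * rho * sig * K * (n%:R) ^+ 5 * a0 + 12%:R * t ^+ 3 * C * r * rho * sig * K * a1 + 4%:R * t ^+ 3 * C * r * rho * sig * K * l%:R * a1 - 3%:R * t ^+ 3 * C * r * rho * sig * K * (l%:R) ^+ 2 * a1 - t ^+ 3 * C * r * rho * sig * K * (l%:R) ^+ 3 * a1 + 28%:R * t ^+ 3 * C * r * rho * sig * K * n%:R * a1 + 8%:R * t ^+ 3 * C * r * rho * sig * K * n%:R * l%:R * a1 - 4%:R * t ^+ 3 * C * r * rho * sig * K * n%:R * (l%:R) ^+ 2 * a1 - t ^+ 3 * C * r * rho * sig * K * n%:R * (l%:R) ^+ 3 * a1 + 23%:R * t ^+ 3 * C * r * rho * sig * K * (n%:R) ^+ 2 * a1 + 5%:R * t ^+ 3 * C * r * rho * sig * K * (n%:R) ^+ 2 * l%:R * a1 - t ^+ 3 * C * r * rho * sig * K * (n%:R) ^+ 2 * (l%:R) ^+ 2 * a1 + 8%:R * t ^+ 3 * C * r * rho * sig * K * (n%:R) ^+ 3 * a1 + t ^+ 3 * C * r * rho * sig * K * (n%:R) ^+ 3 * l%:R * a1 + t ^+ 3 * C * r * rho * sig * K * (n%:R) ^+ 4 * a1) / ((2%:R + 2%:R * n%:R) * (3%:R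 + l%:R + n%:R) * (2%:R - l%:R + n%:R))) e1 e2).
    field; side.
  - field; side.
  - field; side.
  - apply: (cert (lam := (- 12%:R * sp ^+ 2 * S * r * rho * sig * K * a0 + 8%:R * sp ^+ 2 * S * r * rho * sig * K * l%:R * a0 + 7%:R * sp ^+ 2 * S * r * rho * sig * K * (l%:R) ^+ 2 * a0 - 2%:R * sp ^+ 2 * S * r * rho * sig * K * (l%:R) ^+ 3 * a0 - sp ^+ 2 * S * r * rho * sig * K * (l%:R) ^+ 4 * a0 - 40%:R * sp ^+ 2 * S * r * rho * sig * K * n%:R * a0 + 16%:R * sp ^+ 2 * S * r * rho * sig * K * n%:R * l%:R * a0 + 15%:R * sp ^+ 2 * S * r * rho * sig * K * n%:R * (l%:R) ^+ 2 * a0 - 2%:R * sp ^+ 2 * S * r * rho * sig * K * n%:R * (l%:R) ^+ 3 * a0 - sp ^+ 2 * S * r * rho * sig * K * n%:R * (l%:R) ^+ 4 * a0 - 51%:R * sp ^+ 2 * S * r * rho * sig * K * (n%:R) ^+ 2 * a0 + 10%:R * sp ^+ 2 * S * r * rho * sig * K * (n%:R) ^+ 2 * l%:R * a0 + 10%:R * sp ^+ 2 * S * r * rho * sig * K * (n%:R) ^+ 2 * (l%:R) ^+ 2 * a0 - 31%:R * sp ^+ 2 * S * r * rho * sig * K * (n%:R) ^+ 3 * a0 + 2%:R * sp ^+ 2 * S * r * rho * sig * K * (n%:R) ^+ 3 * l%:R * a0 + 2%:R * sp ^+ 2 * S * r * rho * sig * K * (n%:R) ^+ 3 * (l%:R)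 ^+ 2 * a0 - 9%:R * sp ^+ 2 * S * r * rho * sig * K * (n%:R) ^+ 4 * a0 - sp ^+ 2 * S * r * rho * sig * K * (n%:R) ^+ 5 * a0 - 12%:R * cp ^+ 2 * S * r * rho * sig * K * a0 + 8%:R * cp ^+ 2 * S * r * rho * sig * K * l%:R * a0 + 7%:R * cp ^+ 2 * S * r * rho * sig * K * (l%:R) ^+ 2 * a0 - 2%:R * cp ^+ 2 * S * r * rho * sig * K * (l%:R) ^+ 3 * a0 - cp ^+ 2 * S * r * rho * sig * K * (l%:R) ^+ 4 * a0 - 40%:R * cp ^+ 2 * S * r * rho * sig * K * n%:R * a0 + 16%:R * cp ^+ 2 * S * r * rho * sig * K * n%:R * l%:R * a0 + 15%:R * cp ^+ 2 * S * r * rho * sig * K * n%:R * (l%:R) ^+ 2 * a0 - 2%:R * cp ^+ 2 * S * r * rho * sig * K * n%:R * (l%:R) ^+ 3 * a0 - cp ^+ 2 * S * r * rho * sig * K * n%:R * (l%:R) ^+ 4 * a0 - 51%:R * cp ^+ 2 * S * r * rho * sig * K * (n%:R) ^+ 2 * a0 + 10%:R * cp ^+ 2 * S * r * rho * sig * K * (n%:R) ^+ 2 * l%:R * a0 + 10%:R * cp ^+ 2 * S * r * rho * sig * K * (n%:R) ^+ 2 * (l%:R) ^+ 2 * a0 - 31%:R * cp ^+ 2 * S * r * rho * sig * K * (n%:R) ^+ 3 * a0 + 2%:R * cp ^+ 2 * S * r * rho * sig * K * (n%:R) ^+ 3 * l%:R * a0 + 2%:R * cp ^+ 2 * S * r *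 rho * sig * K * (n%:R) ^+ 3 * (l%:R) ^+ 2 * a0 - 9%:R * cp ^+ 2 * S * r * rho * sig * K * (n%:R) ^+ 4 * a0 - cp ^+ 2 * S * r * rho * sig * K * (n%:R) ^+ 5 * a0 + 12%:R * t * sp ^+ 2 * S * r * rho * sig * K * a1 + 4%:R * t * sp ^+ 2 * S * r * rho * sig * K * l%:R * a1 - 3%:R * t * sp ^+ 2 * S * r * rho * sig * K * (l%:R) ^+ 2 * a1 - t * sp ^+ 2 * S * r * rho * sig * K * (l%:R) ^+ 3 * a1 + 28%:R * t * sp ^+ 2 * S * r * rho * sig * K * n%:R * a1 + 8%:R * t * sp ^+ 2 * S * r * rho * sig * K * n%:R * l%:R * a1 - 4%:R * t * sp ^+ 2 * S * r * rho * sig * K * n%:R * (l%:R) ^+ 2 * a1 - t * sp ^+ 2 * S * r * rho * sig * K * n%:R * (l%:R) ^+ 3 * a1 + 23%:R * t * sp ^+ 2 * S * r * rho * sig * K * (n%:R) ^+ 2 * a1 + 5%:R * t * sp ^+ 2 * S * r * rho * sig * K * (n%:R) ^+ 2 * l%:R * a1 - t * sp ^+ 2 * S * r * rho * sig * K * (n%:R) ^+ 2 * (l%:R) ^+ 2 * a1 + 8%:R * t * sp ^+ 2 * S * r * rho * sig * K * (n%:R) ^+ 3 * a1 + t * sp ^+ 2 * S * r * rho * sig * K * (n%:R) ^+ 3 * l%:R * a1 + t * sp ^+ 2 * S * r * rho * sig * K * (n%:R) ^+ 4 * a1 + 12%:R * t * cp ^+ 2 * S * r * rho * sig * K * a1 +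 4%:R * t * cp ^+ 2 * S * r * rho * sig * K * l%:R * a1 - 3%:R * t * cp ^+ 2 * S * r * rho * sig * K * (l%:R) ^+ 2 * a1 - t * cp ^+ 2 * S * r * rho * sig * K * (l%:R) ^+ 3 * a1 + 28%:R * t * cp ^+ 2 * S * r * rho * sig * K * n%:R * a1 + 8%:R * t * cp ^+ 2 * S * r * rho * sig * K * n%:R * l%:R * a1 - 4%:R * t * cp ^+ 2 * S * r * rho * sig * K * n%:R * (l%:R) ^+ 2 * a1 - t * cp ^+ 2 * S * r * rho * sig * K * n%:R * (l%:R) ^+ 3 * a1 + 23%:R * t * cp ^+ 2 * S * r * rho * sig * K * (n%:R) ^+ 2 * a1 + 5%:R * t * cp ^+ 2 * S * r * rho * sig * K * (n%:R) ^+ 2 * l%:R * a1 - t * cp ^+ 2 * S * r * rho * sig * K * (n%:R) ^+ 2 * (l%:R) ^+ 2 * a1 + 8%:R * t * cp ^+ 2 * S * r * rho * sig * K * (n%:R) ^+ 3 * a1 + t * cp ^+ 2 * S * r * rho * sig * K * (n%:R) ^+ 3 * l%:R * a1 + t * cp ^+ 2 * S * r * rho * sig * K * (n%:R) ^+ 4 * a1) / ((2%:R + 2%:R * n%:R) * (3%:R + l%:R + n%:R) * (2%:R - l%:R + n%:R))) (mu := (- 12%:R * S * r * rho * sig * K * a0 + 8%:R * S * r * rho * sig * K * l%:R * a0 + 7%:R * S * r * rho * sig * K * (l%:R) ^+ 2 * a0 - 2%:R * S * r * rho * sig * K * (l%:R) ^+ 3 * a0 - S * r * rho * sig * K * (l%:R)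 ^+ 4 * a0 - 40%:R * S * r * rho * sig * K * n%:R * a0 + 16%:R * S * r * rho * sig * K * n%:R * l%:R * a0 + 15%:R * S * r * rho * sig * K * n%:R * (l%:R) ^+ 2 * a0 - 2%:R * S * r * rho * sig * K * n%:R * (l%:R) ^+ 3 * a0 - S * r * rho * sig * K * n%:R * (l%:R) ^+ 4 * a0 - 51%:R * S * r * rho * sig * K * (n%:R) ^+ 2 * a0 + 10%:R * S * r * rho * sig * K * (n%:R) ^+ 2 * l%:R * a0 + 10%:R * S * r * rho * sig * K * (n%:R) ^+ 2 * (l%:R) ^+ 2 * a0 - 31%:R * S * r * rho * sig * K * (n%:R) ^+ 3 * a0 + 2%:R * S * r * rho * sig * K * (n%:R) ^+ 3 * l%:R * a0 + 2%:R * S * r * rho * sig * K * (n%:R) ^+ 3 * (l%:R) ^+ 2 * a0 - 9%:R * S * r * rho * sig * K * (n%:R) ^+ 4 * a0 - S * r * rho * sig * K * (n%:R) ^+ 5 * a0 + 12%:R * t * S * r * rho * sig * K * a1 + 4%:R * t * S * r * rho * sig * K * l%:R * a1 - 3%:R * t * S * r * rho * sig * K * (l%:R) ^+ 2 * a1 - t * S * r * rho * sig * K * (l%:R) ^+ 3 * a1 + 28%:R * t * S * r * rho * sig * K * n%:R * a1 + 8%:R * t * S * r * rho * sig * K * n%:R * l%:R * a1 - 4%:R * t * S * r * rho * sig * K * n%:R * (l%:R) ^+ 2 * a1 - t * S * r * rho * sig * K * n%:R * (l%:R) ^+ 3 * a1 + 23%:R * t * S * r * rho * sig * K * (n%:R)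 ^+ 2 * a1 + 5%:R * t * S * r * rho * sig * K * (n%:R) ^+ 2 * l%:R * a1 - t * S * r * rho * sig * K * (n%:R) ^+ 2 * (l%:R) ^+ 2 * a1 + 8%:R * t * S * r * rho * sig * K * (n%:R) ^+ 3 * a1 + t * S * r * rho * sig * K * (n%:R) ^+ 3 * l%:R * a1 + t * S * r * rho * sig * K * (n%:R) ^+ 4 * a1 + 12%:R * t ^+ 2 * S * r * rho * sig * K * a0 - 8%:R * t ^+ 2 * S * r * rho * sig * K * l%:R * a0 - 7%:R * t ^+ 2 * S * r * rho * sig * K * (l%:R) ^+ 2 * a0 + 2%:R * t ^+ 2 * S * r * rho * sig * K * (l%:R) ^+ 3 * a0 + t ^+ 2 * S * r * rho * sig * K * (l%:R) ^+ 4 * a0 + 40%:R * t ^+ 2 * S * r * rho * sig * K * n%:R * a0 - 16%:R * t ^+ 2 * S * r * rho * sig * K * n%:R * l%:R * a0 - 15%:R * t ^+ 2 * S * r * rho * sig * K * n%:R * (l%:R) ^+ 2 * a0 + 2%:R * t ^+ 2 * S * r * rho * sig * K * n%:R * (l%:R) ^+ 3 * a0 + t ^+ 2 * S * r * rho * sig * K * n%:R * (l%:R) ^+ 4 * a0 + 51%:R * t ^+ 2 * S * r * rho * sig * K * (n%:R) ^+ 2 * a0 - 10%:R * t ^+ 2 * S * r * rho * sig * K * (n%:R) ^+ 2 * l%:R * a0 - 10%:R * t ^+ 2 * S * r * rho * sig * K * (n%:R) ^+ 2 * (l%:R) ^+ 2 * a0 + 31%:R * t ^+ 2 * S * r * rho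 * sig * K * (n%:R) ^+ 3 * a0 - 2%:R * t ^+ 2 * S * r * rho * sig * K * (n%:R) ^+ 3 * l%:R * a0 - 2%:R * t ^+ 2 * S * r * rho * sig * K * (n%:R) ^+ 3 * (l%:R) ^+ 2 * a0 + 9%:R * t ^+ 2 * S * r * rho * sig * K * (n%:R) ^+ 4 * a0 + t ^+ 2 * S * r * rho * sig * K * (n%:R) ^+ 5 * a0 - 12%:R * t ^+ 3 * S * r * rho * sig * K * a1 - 4%:R * t ^+ 3 * S * r * rho * sig * K * l%:R * a1 + 3%:R * t ^+ 3 * S * r * rho * sig * K * (l%:R) ^+ 2 * a1 + t ^+ 3 * S * r * rho * sig * K * (l%:R) ^+ 3 * a1 - 28%:R * t ^+ 3 * S * r * rho * sig * K * n%:R * a1 - 8%:R * t ^+ 3 * S * r * rho * sig * K * n%:R * l%:R * a1 + 4%:R * t ^+ 3 * S * r * rho * sig * K * n%:R * (l%:R) ^+ 2 * a1 + t ^+ 3 * S * r * rho * sig * K * n%:R * (l%:R) ^+ 3 * a1 - 23%:R * t ^+ 3 * S * r * rho * sig * K * (n%:R) ^+ 2 * a1 - 5%:R * t ^+ 3 * S * r * rho * sig * K * (n%:R) ^+ 2 * l%:R * a1 + t ^+ 3 * S * r * rho * sig * K * (n%:R) ^+ 2 * (l%:R) ^+ 2 * a1 - 8%:R * t ^+ 3 * S * r * rho * sig * K * (n%:R) ^+ 3 * a1 - t ^+ 3 * S * r * rho * sig * K * (n%:R) ^+ 3 * l%:R * a1 - t ^+ 3 * S * r * rho * sig * K * (n%:R)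 ^+ 4 * a1) / ((2%:R + 2%:R * n%:R) * (3%:R + l%:R + n%:R) * (2%:R - l%:R + n%:R))) e1 e2).
    field; side.
rewrite /A /B /Qshape; apply: quat_eq; cbn [q0 q1 q2 q3 qadd qsub qscale qmul qhat paravec parabar];
  rewrite hA0 hA1 hB0 hB1.
- apply: (cert (lam := (- 24%:R * sp ^+ 2 * C * r * rho * sig * K * a0 + 4%:R * sp ^+ 2 * C * r * rho * sig * K * l%:R * a0 + 22%:R * sp ^+ 2 * C * r * rho * sig * K * (l%:R) ^+ 2 * a0 + 3%:R * sp ^+ 2 * C * r * rho * sig * K * (l%:R) ^+ 3 * a0 - 4%:R * sp ^+ 2 * C * r * rho * sig * K * (l%:R) ^+ 4 * a0 - sp ^+ 2 * C * r * rho * sig * K * (l%:R) ^+ 5 * a0 - 92%:R * sp ^+ 2 * C * r * rho * sig * K * n%:R * a0 + 53%:R * sp ^+ 2 * C * r * rho * sig * K * n%:R * (l%:R) ^+ 2 * a0 + 9%:R * sp ^+ 2 * C * r * rho * sig * K * n%:R * (l%:R) ^+ 3 * a0 - 5%:R * sp ^+ 2 * C * r * rho * sig * K * n%:R * (l%:R) ^+ 4 * a0 - sp ^+ 2 * C * r * rho * sig * K * n%:R * (l%:R) ^+ 5 * a0 - 142%:R * sp ^+ 2 * C * r * rho * sig * K * (n%:R) ^+ 2 * a0 - 15%:R * sp ^+ 2 * C * r * rho * sig * K * (n%:R) ^+ 2 * l%:R * a0 + 45%:R * sp ^+ 2 * C * r * rho * sig * K * (n%:R) ^+ 2 * (l%:R)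 ^+ 2 * a0 + 8%:R * sp ^+ 2 * C * r * rho * sig * K * (n%:R) ^+ 2 * (l%:R) ^+ 3 * a0 - sp ^+ 2 * C * r * rho * sig * K * (n%:R) ^+ 2 * (l%:R) ^+ 4 * a0 - 113%:R * sp ^+ 2 * C * r * rho * sig * K * (n%:R) ^+ 3 * a0 - 17%:R * sp ^+ 2 * C * r * rho * sig * K * (n%:R) ^+ 3 * l%:R * a0 + 16%:R * sp ^+ 2 * C * r * rho * sig * K * (n%:R) ^+ 3 * (l%:R) ^+ 2 * a0 + 2%:R * sp ^+ 2 * C * r * rho * sig * K * (n%:R) ^+ 3 * (l%:R) ^+ 3 * a0 - 49%:R * sp ^+ 2 * C * r * rho * sig * K * (n%:R) ^+ 4 * a0 - 7%:R * sp ^+ 2 * C * r * rho * sig * K * (n%:R) ^+ 4 * l%:R * a0 + 2%:R * sp ^+ 2 * C * r * rho * sig * K * (n%:R) ^+ 4 * (l%:R) ^+ 2 * a0 - 11%:R * sp ^+ 2 * C * r * rho * sig * K * (n%:R) ^+ 5 * a0 - sp ^+ 2 * C * r * rho * sig * K * (n%:R) ^+ 5 * l%:R * a0 - sp ^+ 2 * C * r * rho * sig * K * (n%:R) ^+ 6 * a0 - 24%:R * cp ^+ 2 * C * r * rho * sig * K * a0 + 4%:R * cp ^+ 2 * C * r * rho * sig * K * l%:R * a0 + 22%:R * cp ^+ 2 * C * r * rho * sig * K * (l%:R) ^+ 2 * a0 + 3%:R * cp ^+ 2 * C * r * rho * sig * K * (l%:R) ^+ 3 * a0 - 4%:R * cp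 ^+ 2 * C * r * rho * sig * K * (l%:R) ^+ 4 * a0 - cp ^+ 2 * C * r * rho * sig * K * (l%:R) ^+ 5 * a0 - 92%:R * cp ^+ 2 * C * r * rho * sig * K * n%:R * a0 + 53%:R * cp ^+ 2 * C * r * rho * sig * K * n%:R * (l%:R) ^+ 2 * a0 + 9%:R * cp ^+ 2 * C * r * rho * sig * K * n%:R * (l%:R) ^+ 3 * a0 - 5%:R * cp ^+ 2 * C * r * rho * sig * K * n%:R * (l%:R) ^+ 4 * a0 - cp ^+ 2 * C * r * rho * sig * K * n%:R * (l%:R) ^+ 5 * a0 - 142%:R * cp ^+ 2 * C * r * rho * sig * K * (n%:R) ^+ 2 * a0 - 15%:R * cp ^+ 2 * C * r * rho * sig * K * (n%:R) ^+ 2 * l%:R * a0 + 45%:R * cp ^+ 2 * C * r * rho * sig * K * (n%:R) ^+ 2 * (l%:R) ^+ 2 * a0 + 8%:R * cp ^+ 2 * C * r * rho * sig * K * (n%:R) ^+ 2 * (l%:R) ^+ 3 * a0 - cp ^+ 2 * C * r * rho * sig * K * (n%:R) ^+ 2 * (l%:R) ^+ 4 * a0 - 113%:R * cp ^+ 2 * C * r * rho * sig * K * (n%:R) ^+ 3 * a0 - 17%:R * cp ^+ 2 * C * r * rho * sig * K * (n%:R) ^+ 3 * l%:R * a0 + 16%:R * cp ^+ 2 * C * r * rho * sig * K * (n%:R) ^+ 3 * (l%:R) ^+ 2 * a0 + 2%:R * cp ^+ 2 * C * r * rho * sig * K * (n%:R) ^+ 3 * (l%:R) ^+ 3 * a0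 - 49%:R * cp ^+ 2 * C * r * rho * sig * K * (n%:R) ^+ 4 * a0 - 7%:R * cp ^+ 2 * C * r * rho * sig * K * (n%:R) ^+ 4 * l%:R * a0 + 2%:R * cp ^+ 2 * C * r * rho * sig * K * (n%:R) ^+ 4 * (l%:R) ^+ 2 * a0 - 11%:R * cp ^+ 2 * C * r * rho * sig * K * (n%:R) ^+ 5 * a0 - cp ^+ 2 * C * r * rho * sig * K * (n%:R) ^+ 5 * l%:R * a0 - cp ^+ 2 * C * r * rho * sig * K * (n%:R) ^+ 6 * a0 + 24%:R * t * sp ^+ 2 * C * r * rho * sig * K * a1 + 20%:R * t * sp ^+ 2 * C * r * rho * sig * K * l%:R * a1 - 2%:R * t * sp ^+ 2 * C * r * rho * sig * K * (l%:R) ^+ 2 * a1 - 5%:R * t * sp ^+ 2 * C * r * rho * sig * K * (l%:R) ^+ 3 * a1 - t * sp ^+ 2 * C * r * rho * sig * K * (l%:R) ^+ 4 * a1 + 68%:R * t * sp ^+ 2 * C * r * rho * sig * K * n%:R * a1 + 48%:R * t * sp ^+ 2 * C * r * rho * sig * K * n%:R * l%:R * a1 - 3%:R * t * sp ^+ 2 * C * r * rho * sig * K * n%:R * (l%:R) ^+ 2 * a1 - 7%:R * t * sp ^+ 2 * C * r * rho * sig * K * n%:R * (l%:R) ^+ 3 * a1 - t * sp ^+ 2 * C * r * rho * sig * K * n%:R * (l%:R) ^+ 4 * a1 + 74%:R * t * sp ^+ 2 * C * r * rho * sig * K * (n%:R) ^+ 2 * a1 + 41%:R * t * sp ^+ 2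 * C * r * rho * sig * K * (n%:R) ^+ 2 * l%:R * a1 - t * sp ^+ 2 * C * r * rho * sig * K * (n%:R) ^+ 2 * (l%:R) ^+ 2 * a1 - 2%:R * t * sp ^+ 2 * C * r * rho * sig * K * (n%:R) ^+ 2 * (l%:R) ^+ 3 * a1 + 39%:R * t * sp ^+ 2 * C * r * rho * sig * K * (n%:R) ^+ 3 * a1 + 15%:R * t * sp ^+ 2 * C * r * rho * sig * K * (n%:R) ^+ 3 * l%:R * a1 + 10%:R * t * sp ^+ 2 * C * r * rho * sig * K * (n%:R) ^+ 4 * a1 + 2%:R * t * sp ^+ 2 * C * r * rho * sig * K * (n%:R) ^+ 4 * l%:R * a1 + t * sp ^+ 2 * C * r * rho * sig * K * (n%:R) ^+ 5 * a1 + 24%:R * t * cp ^+ 2 * C * r * rho * sig * K * a1 + 20%:R * t * cp ^+ 2 * C * r * rho * sig * K * l%:R * a1 - 2%:R * t * cp ^+ 2 * C * r * rho * sig * K * (l%:R) ^+ 2 * a1 - 5%:R * t * cp ^+ 2 * C * r * rho * sig * K * (l%:R) ^+ 3 * a1 - t * cp ^+ 2 * C * r * rho * sig * K * (l%:R) ^+ 4 * a1 + 68%:R * t * cp ^+ 2 * C * r * rho * sig * K * n%:R * a1 + 48%:R * t * cp ^+ 2 * C * r * rho * sig * K * n%:R * l%:R * a1 - 3%:R * t * cp ^+ 2 * C * r * rho * sig * K * n%:R * (l%:R) ^+ 2 * a1 - 7%:R * t * cp ^+ 2 * C * r * rho * sig * K * n%:R * (l%:R) ^+ 3 * a1 - t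 * cp ^+ 2 * C * r * rho * sig * K * n%:R * (l%:R) ^+ 4 * a1 + 74%:R * t * cp ^+ 2 * C * r * rho * sig * K * (n%:R) ^+ 2 * a1 + 41%:R * t * cp ^+ 2 * C * r * rho * sig * K * (n%:R) ^+ 2 * l%:R * a1 - t * cp ^+ 2 * C * r * rho * sig * K * (n%:R) ^+ 2 * (l%:R) ^+ 2 * a1 - 2%:R * t * cp ^+ 2 * C * r * rho * sig * K * (n%:R) ^+ 2 * (l%:R) ^+ 3 * a1 + 39%:R * t * cp ^+ 2 * C * r * rho * sig * K * (n%:R) ^+ 3 * a1 + 15%:R * t * cp ^+ 2 * C * r * rho * sig * K * (n%:R) ^+ 3 * l%:R * a1 + 10%:R * t * cp ^+ 2 * C * r * rho * sig * K * (n%:R) ^+ 4 * a1 + 2%:R * t * cp ^+ 2 * C * r * rho * sig * K * (n%:R) ^+ 4 * l%:R * a1 + t * cp ^+ 2 * C * r * rho * sig * K * (n%:R) ^+ 5 * a1) / ((3%:R + l%:R + n%:R) * (2%:R - l%:R + n%:R) * (4%:R - 2%:R * l%:R - 2%:R * (l%:R) ^+ 2 + 6%:R * n%:R + 2%:R * (n%:R) ^+ 2))) (mu := (- 24%:R * C * r * rho * sig * K * a0 + 4%:R * C * r * rho * sig * K * l%:R * a0 + 22%:R * C * r * rho * sig * K * (l%:R) ^+ 2 * a0 + 3%:R * C * r * rho * sig * K * (l%:R) ^+ 3 * a0 - 4%:R * C * r * rho * sig * K * (l%:R) ^+ 4 * a0 - C * r * rho * sig * K * (l%:R) ^+ 5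 * a0 - 92%:R * C * r * rho * sig * K * n%:R * a0 + 53%:R * C * r * rho * sig * K * n%:R * (l%:R) ^+ 2 * a0 + 9%:R * C * r * rho * sig * K * n%:R * (l%:R) ^+ 3 * a0 - 5%:R * C * r * rho * sig * K * n%:R * (l%:R) ^+ 4 * a0 - C * r * rho * sig * K * n%:R * (l%:R) ^+ 5 * a0 - 142%:R * C * r * rho * sig * K * (n%:R) ^+ 2 * a0 - 15%:R * C * r * rho * sig * K * (n%:R) ^+ 2 * l%:R * a0 + 45%:R * C * r * rho * sig * K * (n%:R) ^+ 2 * (l%:R) ^+ 2 * a0 + 8%:R * C * r * rho * sig * K * (n%:R) ^+ 2 * (l%:R) ^+ 3 * a0 - C * r * rho * sig * K * (n%:R) ^+ 2 * (l%:R) ^+ 4 * a0 - 113%:R * C * r * rho * sig * K * (n%:R) ^+ 3 * a0 - 17%:R * C * r * rho * sig * K * (n%:R) ^+ 3 * l%:R * a0 + 16%:R * C * r * rho * sig * K * (n%:R) ^+ 3 * (l%:R) ^+ 2 * a0 + 2%:R * C * r * rho * sig * K * (n%:R) ^+ 3 * (l%:R) ^+ 3 * a0 - 49%:R * C * r * rho * sig * K * (n%:R) ^+ 4 * a0 - 7%:R * C * r * rho * sig * K * (n%:R) ^+ 4 * l%:R * a0 + 2%:R * C * r * rho * sig * K * (n%:R) ^+ 4 * (l%:R) ^+ 2 * a0 - 11%:R * C * r * rho * sig * K * (n%:R) ^+ 5 * a0 - C * r * rho * sig * K * (n%:R) ^+ 5 * l%:R * a0 - C * r * rho * sig * K * (n%:R)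 ^+ 6 * a0 + 24%:R * t * C * r * rho * sig * K * a1 + 20%:R * t * C * r * rho * sig * K * l%:R * a1 - 2%:R * t * C * r * rho * sig * K * (l%:R) ^+ 2 * a1 - 5%:R * t * C * r * rho * sig * K * (l%:R) ^+ 3 * a1 - t * C * r * rho * sig * K * (l%:R) ^+ 4 * a1 + 68%:R * t * C * r * rho * sig * K * n%:R * a1 + 48%:R * t * C * r * rho * sig * K * n%:R * l%:R * a1 - 3%:R * t * C * r * rho * sig * K * n%:R * (l%:R) ^+ 2 * a1 - 7%:R * t * C * r * rho * sig * K * n%:R * (l%:R) ^+ 3 * a1 - t * C * r * rho * sig * K * n%:R * (l%:R) ^+ 4 * a1 + 74%:R * t * C * r * rho * sig * K * (n%:R) ^+ 2 * a1 + 41%:R * t * C * r * rho * sig * K * (n%:R) ^+ 2 * l%:R * a1 - t * C * r * rho * sig * K * (n%:R) ^+ 2 * (l%:R) ^+ 2 * a1 - 2%:R * t * C * r * rho * sig * K * (n%:R) ^+ 2 * (l%:R) ^+ 3 * a1 + 39%:R * t * C * r * rho * sig * K * (n%:R) ^+ 3 * a1 + 15%:R * t * C * r * rho * sig * K * (n%:R) ^+ 3 * l%:R * a1 + 10%:R * t * C * r * rho * sig * K * (n%:R) ^+ 4 * a1 + 2%:R * t * C * r * rho * sig * K * (n%:R) ^+ 4 * l%:R * a1 + t * C * r * rho * sig * K * (n%:R) ^+ 5 * a1 + 24%:R * t ^+ 2 * C * r * rho * sig * K * a0 - 4%:R * t ^+ 2 * C * r * rho * sig * K * l%:R * a0 -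 22%:R * t ^+ 2 * C * r * rho * sig * K * (l%:R) ^+ 2 * a0 - 3%:R * t ^+ 2 * C * r * rho * sig * K * (l%:R) ^+ 3 * a0 + 4%:R * t ^+ 2 * C * r * rho * sig * K * (l%:R) ^+ 4 * a0 + t ^+ 2 * C * r * rho * sig * K * (l%:R) ^+ 5 * a0 + 92%:R * t ^+ 2 * C * r * rho * sig * K * n%:R * a0 - 53%:R * t ^+ 2 * C * r * rho * sig * K * n%:R * (l%:R) ^+ 2 * a0 - 9%:R * t ^+ 2 * C * r * rho * sig * K * n%:R * (l%:R) ^+ 3 * a0 + 5%:R * t ^+ 2 * C * r * rho * sig * K * n%:R * (l%:R) ^+ 4 * a0 + t ^+ 2 * C * r * rho * sig * K * n%:R * (l%:R) ^+ 5 * a0 + 142%:R * t ^+ 2 * C * r * rho * sig * K * (n%:R) ^+ 2 * a0 + 15%:R * t ^+ 2 * C * r * rho * sig * K * (n%:R) ^+ 2 * l%:R * a0 - 45%:R * t ^+ 2 * C * r * rho * sig * K * (n%:R) ^+ 2 * (l%:R) ^+ 2 * a0 - 8%:R * t ^+ 2 * C * r * rho * sig * K * (n%:R) ^+ 2 * (l%:R) ^+ 3 * a0 + t ^+ 2 * C * r * rho * sig * K * (n%:R) ^+ 2 * (l%:R) ^+ 4 * a0 + 113%:R * t ^+ 2 * C * r * rho * sig * K * (n%:R) ^+ 3 * a0 + 17%:R * t ^+ 2 * C * r * rho * sig * K * (n%:R) ^+ 3 * l%:R * a0 - 16%:R * t ^+ 2 * C * r * rho * sig * K * (n%:R) ^+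 3 * (l%:R) ^+ 2 * a0 - 2%:R * t ^+ 2 * C * r * rho * sig * K * (n%:R) ^+ 3 * (l%:R) ^+ 3 * a0 + 49%:R * t ^+ 2 * C * r * rho * sig * K * (n%:R) ^+ 4 * a0 + 7%:R * t ^+ 2 * C * r * rho * sig * K * (n%:R) ^+ 4 * l%:R * a0 - 2%:R * t ^+ 2 * C * r * rho * sig * K * (n%:R) ^+ 4 * (l%:R) ^+ 2 * a0 + 11%:R * t ^+ 2 * C * r * rho * sig * K * (n%:R) ^+ 5 * a0 + t ^+ 2 * C * r * rho * sig * K * (n%:R) ^+ 5 * l%:R * a0 + t ^+ 2 * C * r * rho * sig * K * (n%:R) ^+ 6 * a0 - 24%:R * t ^+ 3 * C * r * rho * sig * K * a1 - 20%:R * t ^+ 3 * C * r * rho * sig * K * l%:R * a1 + 2%:R * t ^+ 3 * C * r * rho * sig * K * (l%:R) ^+ 2 * a1 + 5%:R * t ^+ 3 * C * r * rho * sig * K * (l%:R) ^+ 3 * a1 + t ^+ 3 * C * r * rho * sig * K * (l%:R) ^+ 4 * a1 - 68%:R * t ^+ 3 * C * r * rho * sig * K * n%:R * a1 - 48%:R * t ^+ 3 * C * r * rho * sig * K * n%:R * l%:R * a1 + 3%:R * t ^+ 3 * C * r * rho * sig * K * n%:R * (l%:R) ^+ 2 * a1 + 7%:R * t ^+ 3 * C * r * rho * sig * K * n%:R * (l%:R) ^+ 3 * a1 + t ^+ 3 * C * r * rho * sig * K * n%:R * (l%:R) ^+ 4 * a1 - 74%:R * t ^+ 3 * C * r * rho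 * sig * K * (n%:R) ^+ 2 * a1 - 41%:R * t ^+ 3 * C * r * rho * sig * K * (n%:R) ^+ 2 * l%:R * a1 + t ^+ 3 * C * r * rho * sig * K * (n%:R) ^+ 2 * (l%:R) ^+ 2 * a1 + 2%:R * t ^+ 3 * C * r * rho * sig * K * (n%:R) ^+ 2 * (l%:R) ^+ 3 * a1 - 39%:R * t ^+ 3 * C * r * rho * sig * K * (n%:R) ^+ 3 * a1 - 15%:R * t ^+ 3 * C * r * rho * sig * K * (n%:R) ^+ 3 * l%:R * a1 - 10%:R * t ^+ 3 * C * r * rho * sig * K * (n%:R) ^+ 4 * a1 - 2%:R * t ^+ 3 * C * r * rho * sig * K * (n%:R) ^+ 4 * l%:R * a1 - t ^+ 3 * C * r * rho * sig * K * (n%:R) ^+ 5 * a1) / ((3%:R + l%:R + n%:R) * (2%:R - l%:R + n%:R) * (4%:R - 2%:R * l%:R - 2%:R * (l%:R) ^+ 2 + 6%:R * n%:R + 2%:R * (n%:R) ^+ 2))) e1 e2).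
  field; side.
- field; side.
- field; side.
- apply: (cert (lam := (24%:R * sp ^+ 2 * S * r * rho * sig * K * a0 - 4%:R * sp ^+ 2 * S * r * rho * sig * K * l%:R * a0 - 22%:R * sp ^+ 2 * S * r * rho * sig * K * (l%:R) ^+ 2 * a0 - 3%:R * sp ^+ 2 * S * r * rho * sig * K * (l%:R) ^+ 3 * a0 + 4%:R * sp ^+ 2 * S * r * rho * sig * K * (l%:R) ^+ 4 * a0 + sp ^+ 2 * S * r * rho * sig * K * (l%:R) ^+ 5 * a0 + 92%:R * sp ^+ 2 * S * r * rho * sig * K * n%:R * a0 - 53%:R * sp ^+ 2 * S * r * rho * sig * K * n%:R * (l%:R) ^+ 2 * a0 - 9%:R * sp ^+ 2 * S * r * rho * sig * K * n%:R * (l%:R) ^+ 3 * a0 + 5%:R * sp ^+ 2 * S * r * rho * sig * K * n%:R * (l%:R) ^+ 4 * a0 + sp ^+ 2 * S * r * rho * sig * K * n%:R * (l%:R) ^+ 5 * a0 + 142%:R * sp ^+ 2 * S * r * rho * sig * K * (n%:R) ^+ 2 * a0 + 15%:R * sp ^+ 2 * S * r * rho * sig * K * (n%:R) ^+ 2 * l%:R * a0 - 45%:R * sp ^+ 2 * S * r * rho * sig * K * (n%:R) ^+ 2 * (l%:R) ^+ 2 * a0 - 8%:R * sp ^+ 2 * S * r * rho * sig * K * (n%:R) ^+ 2 * (l%:R) ^+ 3 * a0 + sp ^+ 2 * S * r * rho * sig * K * (n%:R) ^+ 2 * (l%:R) ^+ 4 * a0 + 113%:R * sp ^+ 2 * S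 * r * rho * sig * K * (n%:R) ^+ 3 * a0 + 17%:R * sp ^+ 2 * S * r * rho * sig * K * (n%:R) ^+ 3 * l%:R * a0 - 16%:R * sp ^+ 2 * S * r * rho * sig * K * (n%:R) ^+ 3 * (l%:R) ^+ 2 * a0 - 2%:R * sp ^+ 2 * S * r * rho * sig * K * (n%:R) ^+ 3 * (l%:R) ^+ 3 * a0 + 49%:R * sp ^+ 2 * S * r * rho * sig * K * (n%:R) ^+ 4 * a0 + 7%:R * sp ^+ 2 * S * r * rho * sig * K * (n%:R) ^+ 4 * l%:R * a0 - 2%:R * sp ^+ 2 * S * r * rho * sig * K * (n%:R) ^+ 4 * (l%:R) ^+ 2 * a0 + 11%:R * sp ^+ 2 * S * r * rho * sig * K * (n%:R) ^+ 5 * a0 + sp ^+ 2 * S * r * rho * sig * K * (n%:R) ^+ 5 * l%:R * a0 + sp ^+ 2 * S * r * rho * sig * K * (n%:R) ^+ 6 * a0 + 24%:R * cp ^+ 2 * S * r * rho * sig * K * a0 - 4%:R * cp ^+ 2 * S * r * rho * sig * K * l%:R * a0 - 22%:R * cp ^+ 2 * S * r * rho * sig * K * (l%:R) ^+ 2 * a0 - 3%:R * cp ^+ 2 * S * r * rho * sig * K * (l%:R) ^+ 3 * a0 + 4%:R * cp ^+ 2 * S * r * rho * sig * K * (l%:R) ^+ 4 * a0 + cp ^+ 2 * S * r * rho * sig * K * (l%:R) ^+ 5 * a0 + 92%:R * cp ^+ 2 * S * r * rho * sig * K * n%:R * a0 - 53%:R * cp ^+ 2 * S * r * rho * sig * K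 * n%:R * (l%:R) ^+ 2 * a0 - 9%:R * cp ^+ 2 * S * r * rho * sig * K * n%:R * (l%:R) ^+ 3 * a0 + 5%:R * cp ^+ 2 * S * r * rho * sig * K * n%:R * (l%:R) ^+ 4 * a0 + cp ^+ 2 * S * r * rho * sig * K * n%:R * (l%:R) ^+ 5 * a0 + 142%:R * cp ^+ 2 * S * r * rho * sig * K * (n%:R) ^+ 2 * a0 + 15%:R * cp ^+ 2 * S * r * rho * sig * K * (n%:R) ^+ 2 * l%:R * a0 - 45%:R * cp ^+ 2 * S * r * rho * sig * K * (n%:R) ^+ 2 * (l%:R) ^+ 2 * a0 - 8%:R * cp ^+ 2 * S * r * rho * sig * K * (n%:R) ^+ 2 * (l%:R) ^+ 3 * a0 + cp ^+ 2 * S * r * rho * sig * K * (n%:R) ^+ 2 * (l%:R) ^+ 4 * a0 + 113%:R * cp ^+ 2 * S * r * rho * sig * K * (n%:R) ^+ 3 * a0 + 17%:R * cp ^+ 2 * S * r * rho * sig * K * (n%:R) ^+ 3 * l%:R * a0 - 16%:R * cp ^+ 2 * S * r * rho * sig * K * (n%:R) ^+ 3 * (l%:R) ^+ 2 * a0 - 2%:R * cp ^+ 2 * S * r * rho * sig * K * (n%:R) ^+ 3 * (l%:R) ^+ 3 * a0 + 49%:R * cp ^+ 2 * S * r * rho * sig * K * (n%:R) ^+ 4 * a0 + 7%:R * cp ^+ 2 * S * r * rho * sig * K * (n%:R) ^+ 4 * l%:R * a0 - 2%:R * cp ^+ 2 * S * r * rho * sig * K * (n%:R) ^+ 4 * (l%:R)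 ^+ 2 * a0 + 11%:R * cp ^+ 2 * S * r * rho * sig * K * (n%:R) ^+ 5 * a0 + cp ^+ 2 * S * r * rho * sig * K * (n%:R) ^+ 5 * l%:R * a0 + cp ^+ 2 * S * r * rho * sig * K * (n%:R) ^+ 6 * a0 - 24%:R * t * sp ^+ 2 * S * r * rho * sig * K * a1 - 20%:R * t * sp ^+ 2 * S * r * rho * sig * K * l%:R * a1 + 2%:R * t * sp ^+ 2 * S * r * rho * sig * K * (l%:R) ^+ 2 * a1 + 5%:R * t * sp ^+ 2 * S * r * rho * sig * K * (l%:R) ^+ 3 * a1 + t * sp ^+ 2 * S * r * rho * sig * K * (l%:R) ^+ 4 * a1 - 68%:R * t * sp ^+ 2 * S * r * rho * sig * K * n%:R * a1 - 48%:R * t * sp ^+ 2 * S * r * rho * sig * K * n%:R * l%:R * a1 + 3%:R * t * sp ^+ 2 * S * r * rho * sig * K * n%:R * (l%:R) ^+ 2 * a1 + 7%:R * t * sp ^+ 2 * S * r * rho * sig * K * n%:R * (l%:R) ^+ 3 * a1 + t * sp ^+ 2 * S * r * rho * sig * K * n%:R * (l%:R) ^+ 4 * a1 - 74%:R * t * sp ^+ 2 * S * r * rho * sig * K * (n%:R) ^+ 2 * a1 - 41%:R * t * sp ^+ 2 * S * r * rho * sig * K * (n%:R) ^+ 2 * l%:R * a1 + t * sp ^+ 2 * S * r * rho * sig * K * (n%:R) ^+ 2 * (l%:R) ^+ 2 * a1 + 2%:R * t * sp ^+ 2 * S * r * rho * sig * K * (n%:R) ^+ 2 * (l%:R) ^+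 3 * a1 - 39%:R * t * sp ^+ 2 * S * r * rho * sig * K * (n%:R) ^+ 3 * a1 - 15%:R * t * sp ^+ 2 * S * r * rho * sig * K * (n%:R) ^+ 3 * l%:R * a1 - 10%:R * t * sp ^+ 2 * S * r * rho * sig * K * (n%:R) ^+ 4 * a1 - 2%:R * t * sp ^+ 2 * S * r * rho * sig * K * (n%:R) ^+ 4 * l%:R * a1 - t * sp ^+ 2 * S * r * rho * sig * K * (n%:R) ^+ 5 * a1 - 24%:R * t * cp ^+ 2 * S * r * rho * sig * K * a1 - 20%:R * t * cp ^+ 2 * S * r * rho * sig * K * l%:R * a1 + 2%:R * t * cp ^+ 2 * S * r * rho * sig * K * (l%:R) ^+ 2 * a1 + 5%:R * t * cp ^+ 2 * S * r * rho * sig * K * (l%:R) ^+ 3 * a1 + t * cp ^+ 2 * S * r * rho * sig * K * (l%:R) ^+ 4 * a1 - 68%:R * t * cp ^+ 2 * S * r * rho * sig * K * n%:R * a1 - 48%:R * t * cp ^+ 2 * S * r * rho * sig * K * n%:R * l%:R * a1 + 3%:R * t * cp ^+ 2 * S * r * rho * sig * K * n%:R * (l%:R) ^+ 2 * a1 + 7%:R * t * cp ^+ 2 * S * r * rho * sig * K * n%:R * (l%:R) ^+ 3 * a1 + t * cp ^+ 2 * S * r * rho * sig * K * n%:R * (l%:R) ^+ 4 * a1 - 74%:R * t * cp ^+ 2 * S * r * rho * sig * K * (n%:R) ^+ 2 * a1 - 41%:R * t * cp ^+ 2 * S * r * rho * sig * K * (n%:R) ^+ 2 * l%:R * a1 +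 t * cp ^+ 2 * S * r * rho * sig * K * (n%:R) ^+ 2 * (l%:R) ^+ 2 * a1 + 2%:R * t * cp ^+ 2 * S * r * rho * sig * K * (n%:R) ^+ 2 * (l%:R) ^+ 3 * a1 - 39%:R * t * cp ^+ 2 * S * r * rho * sig * K * (n%:R) ^+ 3 * a1 - 15%:R * t * cp ^+ 2 * S * r * rho * sig * K * (n%:R) ^+ 3 * l%:R * a1 - 10%:R * t * cp ^+ 2 * S * r * rho * sig * K * (n%:R) ^+ 4 * a1 - 2%:R * t * cp ^+ 2 * S * r * rho * sig * K * (n%:R) ^+ 4 * l%:R * a1 - t * cp ^+ 2 * S * r * rho * sig * K * (n%:R) ^+ 5 * a1) / ((3%:R + l%:R + n%:R) * (2%:R - l%:R + n%:R) * (4%:R - 2%:R * l%:R - 2%:R * (l%:R) ^+ 2 + 6%:R * n%:R + 2%:R * (n%:R) ^+ 2))) (mu := (24%:R * S * r * rho * sig * K * a0 - 4%:R * S * r * rho * sig * K * l%:R * a0 - 22%:R * S * r * rho * sig * K * (l%:R) ^+ 2 * a0 - 3%:R * S * r * rho * sig * K * (l%:R) ^+ 3 * a0 + 4%:R * S * r * rho * sig * K * (l%:R) ^+ 4 * a0 + S * r * rho * sig * K * (l%:R) ^+ 5 * a0 + 92%:R * S * r * rho * sig * K * n%:R * a0 - 53%:R * S * r * rho * sig * K * n%:R * (l%:R) ^+ 2 * a0 - 9%:R * S * r * rho * sig * K * n%:R * (l%:R) ^+ 3 * a0 + 5%:R * S * r * rho * sig * K * n%:R * (l%:R) ^+ 4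 * a0 + S * r * rho * sig * K * n%:R * (l%:R) ^+ 5 * a0 + 142%:R * S * r * rho * sig * K * (n%:R) ^+ 2 * a0 + 15%:R * S * r * rho * sig * K * (n%:R) ^+ 2 * l%:R * a0 - 45%:R * S * r * rho * sig * K * (n%:R) ^+ 2 * (l%:R) ^+ 2 * a0 - 8%:R * S * r * rho * sig * K * (n%:R) ^+ 2 * (l%:R) ^+ 3 * a0 + S * r * rho * sig * K * (n%:R) ^+ 2 * (l%:R) ^+ 4 * a0 + 113%:R * S * r * rho * sig * K * (n%:R) ^+ 3 * a0 + 17%:R * S * r * rho * sig * K * (n%:R) ^+ 3 * l%:R * a0 - 16%:R * S * r * rho * sig * K * (n%:R) ^+ 3 * (l%:R) ^+ 2 * a0 - 2%:R * S * r * rho * sig * K * (n%:R) ^+ 3 * (l%:R) ^+ 3 * a0 + 49%:R * S * r * rho * sig * K * (n%:R) ^+ 4 * a0 + 7%:R * S * r * rho * sig * K * (n%:R) ^+ 4 * l%:R * a0 - 2%:R * S * r * rho * sig * K * (n%:R) ^+ 4 * (l%:R) ^+ 2 * a0 + 11%:R * S * r * rho * sig * K * (n%:R) ^+ 5 * a0 + S * r * rho * sig * K * (n%:R) ^+ 5 * l%:R * a0 + S * r * rho * sig * K * (n%:R) ^+ 6 * a0 - 24%:R * t * S * r * rho * sig * K * a1 - 20%:R * t * S * r * rho * sig * K * l%:R * a1 + 2%:R * t * S * r * rho * sig * K * (l%:R) ^+ 2 * a1 + 5%:R * t * S * r * rho * sig * K * (l%:R) ^+ 3 * a1 + t * S *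 r * rho * sig * K * (l%:R) ^+ 4 * a1 - 68%:R * t * S * r * rho * sig * K * n%:R * a1 - 48%:R * t * S * r * rho * sig * K * n%:R * l%:R * a1 + 3%:R * t * S * r * rho * sig * K * n%:R * (l%:R) ^+ 2 * a1 + 7%:R * t * S * r * rho * sig * K * n%:R * (l%:R) ^+ 3 * a1 + t * S * r * rho * sig * K * n%:R * (l%:R) ^+ 4 * a1 - 74%:R * t * S * r * rho * sig * K * (n%:R) ^+ 2 * a1 - 41%:R * t * S * r * rho * sig * K * (n%:R) ^+ 2 * l%:R * a1 + t * S * r * rho * sig * K * (n%:R) ^+ 2 * (l%:R) ^+ 2 * a1 + 2%:R * t * S * r * rho * sig * K * (n%:R) ^+ 2 * (l%:R) ^+ 3 * a1 - 39%:R * t * S * r * rho * sig * K * (n%:R) ^+ 3 * a1 - 15%:R * t * S * r * rho * sig * K * (n%:R) ^+ 3 * l%:R * a1 - 10%:R * t * S * r * rho * sig * K * (n%:R) ^+ 4 * a1 - 2%:R * t * S * r * rho * sig * K * (n%:R) ^+ 4 * l%:R * a1 - t * S * r * rho * sig * K * (n%:R) ^+ 5 * a1 - 24%:R * t ^+ 2 * S * r * rho * sig * K * a0 + 4%:R * t ^+ 2 * S * r * rho * sig * K * l%:R * a0 + 22%:R * t ^+ 2 * S * r * rho * sig * K * (l%:R) ^+ 2 * a0 + 3%:R * t ^+ 2 * S * r * rho * sig * K * (l%:R) ^+ 3 * a0 - 4%:R * t ^+ 2 * S * r * rho * sig * K * (l%:R) ^+ 4 * a0 - t ^+ 2 * S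 * r * rho * sig * K * (l%:R) ^+ 5 * a0 - 92%:R * t ^+ 2 * S * r * rho * sig * K * n%:R * a0 + 53%:R * t ^+ 2 * S * r * rho * sig * K * n%:R * (l%:R) ^+ 2 * a0 + 9%:R * t ^+ 2 * S * r * rho * sig * K * n%:R * (l%:R) ^+ 3 * a0 - 5%:R * t ^+ 2 * S * r * rho * sig * K * n%:R * (l%:R) ^+ 4 * a0 - t ^+ 2 * S * r * rho * sig * K * n%:R * (l%:R) ^+ 5 * a0 - 142%:R * t ^+ 2 * S * r * rho * sig * K * (n%:R) ^+ 2 * a0 - 15%:R * t ^+ 2 * S * r * rho * sig * K * (n%:R) ^+ 2 * l%:R * a0 + 45%:R * t ^+ 2 * S * r * rho * sig * K * (n%:R) ^+ 2 * (l%:R) ^+ 2 * a0 + 8%:R * t ^+ 2 * S * r * rho * sig * K * (n%:R) ^+ 2 * (l%:R) ^+ 3 * a0 - t ^+ 2 * S * r * rho * sig * K * (n%:R) ^+ 2 * (l%:R) ^+ 4 * a0 - 113%:R * t ^+ 2 * S * r * rho * sig * K * (n%:R) ^+ 3 * a0 - 17%:R * t ^+ 2 * S * r * rho * sig * K * (n%:R) ^+ 3 * l%:R * a0 + 16%:R * t ^+ 2 * S * r * rho * sig * K * (n%:R) ^+ 3 * (l%:R) ^+ 2 * a0 + 2%:R * t ^+ 2 * S * r * rho * sig * K * (n%:R) ^+ 3 * (l%:R) ^+ 3 * a0 - 49%:R * t ^+ 2 * S * r * rho * sig * K * (n%:R) ^+ 4 * a0 - 7%:R * t ^+ 2 * S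 * r * rho * sig * K * (n%:R) ^+ 4 * l%:R * a0 + 2%:R * t ^+ 2 * S * r * rho * sig * K * (n%:R) ^+ 4 * (l%:R) ^+ 2 * a0 - 11%:R * t ^+ 2 * S * r * rho * sig * K * (n%:R) ^+ 5 * a0 - t ^+ 2 * S * r * rho * sig * K * (n%:R) ^+ 5 * l%:R * a0 - t ^+ 2 * S * r * rho * sig * K * (n%:R) ^+ 6 * a0 + 24%:R * t ^+ 3 * S * r * rho * sig * K * a1 + 20%:R * t ^+ 3 * S * r * rho * sig * K * l%:R * a1 - 2%:R * t ^+ 3 * S * r * rho * sig * K * (l%:R) ^+ 2 * a1 - 5%:R * t ^+ 3 * S * r * rho * sig * K * (l%:R) ^+ 3 * a1 - t ^+ 3 * S * r * rho * sig * K * (l%:R) ^+ 4 * a1 + 68%:R * t ^+ 3 * S * r * rho * sig * K * n%:R * a1 + 48%:R * t ^+ 3 * S * r * rho * sig * K * n%:R * l%:R * a1 - 3%:R * t ^+ 3 * S * r * rho * sig * K * n%:R * (l%:R) ^+ 2 * a1 - 7%:R * t ^+ 3 * S * r * rho * sig * K * n%:R * (l%:R) ^+ 3 * a1 - t ^+ 3 * S * r * rho * sig * K * n%:R * (l%:R) ^+ 4 * a1 + 74%:R * t ^+ 3 * S * r * rho * sig * K * (n%:R) ^+ 2 * a1 + 41%:R * t ^+ 3 * S * r * rho * sig * K * (n%:R) ^+ 2 * l%:R * a1 - t ^+ 3 * S * r * rho * sig * K * (n%:R) ^+ 2 * (l%:R) ^+ 2 * a1 - 2%:R * t ^+ 3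 * S * r * rho * sig * K * (n%:R) ^+ 2 * (l%:R) ^+ 3 * a1 + 39%:R * t ^+ 3 * S * r * rho * sig * K * (n%:R) ^+ 3 * a1 + 15%:R * t ^+ 3 * S * r * rho * sig * K * (n%:R) ^+ 3 * l%:R * a1 + 10%:R * t ^+ 3 * S * r * rho * sig * K * (n%:R) ^+ 4 * a1 + 2%:R * t ^+ 3 * S * r * rho * sig * K * (n%:R) ^+ 4 * l%:R * a1 + t ^+ 3 * S * r * rho * sig * K * (n%:R) ^+ 5 * a1) / ((3%:R + l%:R + n%:R) * (2%:R - l%:R + n%:R) * (4%:R - 2%:R * l%:R - 2%:R * (l%:R) ^+ 2 + 6%:R * n%:R + 2%:R * (n%:R) ^+ 2))) e1 e2).
  field; side.
Qed.

Lemma Ea (R : realType) k m (t : R) :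
  (legendreP R k.+1)^`(m.+1).[t]
  = t * (legendreP R k)^`(m.+1).[t] + (k.+1 + m)%:R * (legendreP R k)^`(m).[t].
Proof. rewrite D1 !(hornerD, hornerM, hornerMn, hornerX); rewrite mulr_natl; ring. Qed.

Lemma Ec (R : realType) k m (t : R) :
  (1 - t ^+ 2) * (legendreP R k)^`(m.+2).[t]
  = 2 * (m%:R + 1) * t * (legendreP R k)^`(m.+1).[t]
    + (m%:R * (m%:R + 1) - k%:R * (k%:R + 1)) * (legendreP R k)^`(m).[t].
Proof.
have := congr1 (horner^~ t) (O2 R k m).
rewrite !(hornerD, hornerM, hornerMn, hornerX, hornerXn, hornerC, hornerN, hornerE) => e.
apply: (eq_via (esym e)); ring.
Qed.

Lemma Eb (R : realType) n m (t : R) : (m <= n)%N ->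
  (legendreP R n.+2)^`(m).[t]
  = ((n%:R + 2 + m%:R) * t * (legendreP R n.+1)^`(m).[t]
     - (1 - t ^+ 2) * (legendreP R n.+1)^`(m.+1).[t]) / (n%:R + 2 - m%:R).
Proof.
move=> hm.
have hD : (n%:R + 2 - m%:R : R) != 0.
  apply/negbT/gt_eqF; have : (m%:R : R) <= n%:R by rewrite ler_nat.
  have : (0:R) <= m%:R by rewrite ler0n. lra.
case: m hm hD => [|m] hm hD.
  have := congr1 (horner^~ t) (F2 R n.+1).
  rewrite !(hornerMn, hornerD, hornerN, hornerM, hornerX, hornerXn, hornerC) => e.
  rewrite !derivn0 derivn1.
  apply: (mulIf hD); rewrite divfK //.
  apply: (eq_via e); ring.
rewrite Ea Ec.
apply: (mulIf hD); rewrite divfK //; ring.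
Qed.

Lemma Acal_eq (R : realType) m n (th : R) : 0 <= th <= pi ->
  Acal m n th = sin th ^+ m / 2 * ((n%:R + 1 - m%:R) * cos th * (legendreP R n.+1)^`(m).[cos th]
                 + (1 - cos th ^+ 2) * (legendreP R n.+1)^`(m.+1).[cos th]).
Proof.
move=> h; rewrite /Acal sin2_der // /assocLegendre sqrt_sin //; ring.
Qed.

Lemma trigS (R : realType) (l : nat) (phi : R) :
  cos (l.+1%:R * phi) = cos (l%:R * phi) * cos phi - sin (l%:R * phi) * sin phi /\
  sin (l.+1%:R * phi) = sin (l%:R * phi) * cos phi + cos (l%:R * phi) * sin phi.
Proof.
have -> : l.+1%:R * phi = l%:R * phi + phi by rewrite mulrSr mulrDl mul1r.
by rewrite cosD sinD; split; ring.
Qed.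

Lemma AnlE (R : realType) n l (r th phi : R) :
  Anl n l r th phi = Qshape (2 ^+ l.+1 * n`!%:R / (n + l + 2)`!%:R * r ^+ n) (n + l + 2)%:R
     (cos (l%:R * phi)) (sin (l%:R * phi)) (cos phi) (sin phi) (Acal l n th) (Acal l.+1 n th).
Proof.
have [ct st] := trigS R l phi.
rewrite /Anl /Qshape ct st; congr (qscale _ _); ring.
Qed.

Lemma BnlE (R : realType) n l (r th phi : R) :
  Anl n.+1 l r th phi = Qshape (2 ^+ l.+1 * n`!%:R / (n + l + 2)`!%:R * (n%:R + 1) * r * r ^+ n / (n%:R + l%:R + 3))
     (n.+1 + l + 2)%:R
     (cos (l%:R * phi)) (sin (l%:R * phi)) (cos phi) (sin phi) (Acal l n.+1 th) (Acal l.+1 n.+1 th).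
Proof.
have [ct st] := trigS R l phi.
rewrite /Anl /Qshape ct st; congr (qscale _ _).
have -> : (n.+1 + l + 2 = (n + l + 2).+1)%N by rewrite !addSn.
rewrite !factS !natrM [r ^+ n.+1]exprS.
have hF : ((n + l + 2)`!%:R : R) != 0 by rewrite pnatr_eq0 -lt0n fact_gt0.
have h3 : (n%:R + l%:R + 3 : R) != 0.
  apply/negbT/gt_eqF; have : (0:R) <= n%:R by rewrite ler0n.
  have : (0:R) <= l%:R by rewrite ler0n. lra.
have h3' : ((n + l + 2).+1%:R : R) != 0 by rewrite pnatr_eq0.
field; rewrite ?hF ?h3 ?h3' //.
Qed.

Theorem mainTheorem2 (R : realType) (n l : nat) (r theta phi : R) :
  (l <= n)%N -> 0 <= r -> 0 <= theta <= pi ->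
  let x0 := r * cos theta in
  let x1 := r * sin theta * cos phi in
  let x2 := r * sin theta * sin phi in
  qmul (paravec x0 x1 x2) (Anl n l r theta phi)
    = qscale (2 * n.+1%:R)^-1
        (qsub (qscale (2 * n + 3)%:R (Anl n.+1 l r theta phi))
              (qscale (2 * l + 1)%:R (qhat (Anl n.+1 l r theta phi))))
  /\
  Anl n.+1 l r theta phi
    = qscale (n.+1%:R / (2 * (n - l + 1)%:R * (n + l + 2)%:R))
        (qadd (qscale (2 * n + 3)%:R
                 (qmul (paravec x0 x1 x2) (Anl n l r theta phi)))
              (qscale (2 * l + 1)%:R
                 (qmul (parabar x0 x1 x2) (qhat (Anl n l r theta phi))))).
Proof.
move=> hl _ hth x0 x1 x2.
rewrite /x0 /x1 /x2 (BnlE R n l) (AnlE R n l).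
set a0 := (legendreP R n.+1)^`(l).[cos theta].
set a1 := (legendreP R n.+1)^`(l.+1).[cos theta].
have e1 : sin theta ^+ 2 + cos theta ^+ 2 = 1 by rewrite sin2cos2; ring.
have e2 : sin phi ^+ 2 + cos phi ^+ 2 = 1 by rewrite sin2cos2; ring.
have hA0 : Acal l n theta = sin theta ^+ l / 2 * ((n%:R + 1 - l%:R) * cos theta * a0
             + (1 - cos theta ^+ 2) * a1) by rewrite Acal_eq.
have hA1 : Acal l.+1 n theta = sin theta ^+ l * sin theta / 2 * ((n%:R - l%:R) * cos theta * a1
              + (2 * (l%:R + 1) * cos theta * a1
                 + (l%:R * (l%:R + 1) - (n%:R + 1) * (n%:R + 2)) * a0)).
  by rewrite Acal_eq // Ec exprSr -/a0 -/a1; ring.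
have hB0 : Acal l n.+1 theta = sin theta ^+ l / 2 * ((n%:R + 2 - l%:R) * cos theta *
         (((n%:R + 2 + l%:R) * cos theta * a0 - (1 - cos theta ^+ 2) * a1) / (n%:R + 2 - l%:R))
         + (1 - cos theta ^+ 2) * (cos theta * a1 + (n%:R + 2 + l%:R) * a0)).
  by rewrite Acal_eq // Ea (Eb _ _ _ (cos theta) hl) -/a0 -/a1; ring.
have hB1 : Acal l.+1 n.+1 theta = sin theta ^+ l * sin theta / 2 *
    ((n%:R + 1 - l%:R) * cos theta * (cos theta * a1 + (n%:R + 2 + l%:R) * a0)
     + (2 * (l%:R + 1) * cos theta * (cos theta * a1 + (n%:R + 2 + l%:R) * a0)
        + (l%:R * (l%:R + 1) - (n%:R + 2) * (n%:R + 3)) *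
          (((n%:R + 2 + l%:R) * cos theta * a0 - (1 - cos theta ^+ 2) * a1) / (n%:R + 2 - l%:R)))).
  by rewrite Acal_eq // Ec Ea (Eb _ _ _ (cos theta) hl) exprSr -/a0 -/a1; ring.
have M := @model R n l (cos theta) (sin theta) (cos phi) (sin phi) (cos (l%:R * phi)) (sin (l%:R * phi)) r (r ^+ n) (sin theta ^+ l) (2 ^+ l.+1 * n`!%:R / (n + l + 2)`!%:R) a0 a1 _ _ _ _ hl e1 e2 hA0 hA1 hB0 hB1. exact: M.
Qed.
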